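(* Let $K$ be a field and let $f\colon\mathbb Z^k\to K$ be a hypergeometric term on $\mathbb Z^k$ that is a zero divisor. Then for each $\vec v\in\mathbb Z^k$ there exist nonzero polynomials $A_{\vec v},B_{\vec v}\in K[z_1,\dots,z_k]$ such that $A_{\vec v}f=B_{\vec v}f^{\vec v}$ (pointwise on $\mathbb Z^k$), and the rational functions $R_{\vec v}=A_{\vec v}/B_{\vec v}$ satisfy $R_{\vec v}R_{\vec w}^{\vec v}=R_{\vec w}R_{\vec v}^{\vec w}$ for all $\vec v,\vec w\in\mathbb Z^k$.
   Context: For a function or rational function $g$ on $\mathbb Z^k$ and $\vec v\in\mathbb Z^k$, $g^{\vec v}(\vec z)=g(\vec z+\vec v)$. A hypergeometric term on $\mathbb Z^k$ over $K$ is a function $f\colon\mathbb Z^k\to K$ such that for each $i\in\{1,\dots,k\}$ there are nonzero polynomials $A_i,B_i\in K[\vec z]$ with $A_i(\vec z)f(\vec z)=B_i(\vec z)f(\vec z+\vec e_i)$ for all $\vec z\in\mathbb Z^k$. $f$ is a zero divisor if there is a nonzero polynomial $p$ with $p(\vec z)f(\vec z)=0$ for all $\vec z$. *)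

(* Defs.v *)
From HB Require Import structures.
From mathcomp Require Import all_boot all_order all_algebra.
From mathcomp Require Import fraction.
From mathcomp.multinomials Require Import mpoly.
Set Implicit Arguments. Unset Strict Implicit. Unset Printing Implicit Defensive.
Import GRing.Theory.
Local Open Scope ring_scope.

Definition zvec (k : nat) := 'I_k -> int.

Definition zadd (k : nat) (z v : zvec k) : zvec k := fun i => z i + v i.
Definition unitv (k : nat) (i : 'I_k) : zvec k := fun j => (i == j)%:R.

Definition zeval (K : fieldType) (k : nat) (p : {mpoly K[k]}) (z : zvec k) : K :=
  p.@[fun i => (z i)%:~R].

(* the shift p^v (z) = p(z + v) *)
Definition mshift (K : fieldType) (k : nat) (v : zvec k) (p : {mpoly K[k]})
  : {mpoly K[k]} :=
  p \mPo [tuple 'X_i + ((v i)%:~R)%:MP | i < k].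

(* the shift of a rational function A/B: R^v = A^v / B^v *)
Definition ratfun (K : fieldType) (k : nat) := {fraction {mpoly K[k]}}.

Definition frac_of (K : fieldType) (k : nat) (A B : {mpoly K[k]}) : ratfun K k :=
  FracField.tofrac A / FracField.tofrac B.

Definition hypergeometric_term (K : fieldType) (k : nat) (f : zvec k -> K) : Prop :=
  forall i : 'I_k, exists A B : {mpoly K[k]},
    [/\ A != 0, B != 0 &
        forall z : zvec k, zeval A z * f z = zeval B z * f (zadd z (unitv i))].

Definition zero_divisor (K : fieldType) (k : nat) (f : zvec k -> K) : Prop :=
  exists p : {mpoly K[k]}, p != 0 /\ forall z : zvec k, zeval p z * f z = 0.

(* Main.v *)
Require Import Defs.
From HB Require Import structures.
From mathcomp Require Import all_boot all_order all_algebra.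
From mathcomp Require Import fraction.
From mathcomp.multinomials Require Import mpoly.
Local Open Scope ring_scope.
Import GRing.Theory.

Lemma my_comp_mpolyA (K : fieldType) (k : nat) (p : {mpoly K[k]})
  (lq lr : k.-tuple {mpoly K[k]}) :
  comp_mpoly lr (comp_mpoly lq p) =
  comp_mpoly [tuple comp_mpoly lr (tnth lq i) | i < k] p.
Proof.
rewrite (comp_mpolyE p lq) (comp_mpolyE p) raddf_sum /=; apply: eq_bigr => m _.
rewrite comp_mpolyZ rmorph_prod; congr (_ *: _); apply: eq_bigr => i _.
by rewrite rmorphXn tnth_map tnth_ord_tuple.
Qed.

Lemma mshiftK (K : fieldType) (k : nat) (v : zvec k) (q : {mpoly K[k]}) :
  mshift (fun i => - v i) (mshift v q) = q.
Proof.
rewrite /mshift my_comp_mpolyA -[RHS]comp_mpoly_id; congr comp_mpoly.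
apply: eq_from_tnth => i; rewrite !tnth_map !tnth_ord_tuple.
rewrite comp_mpolyD comp_mpolyC comp_mpolyXU -tnth_nth tnth_map tnth_ord_tuple.
by rewrite -addrA -mpolyCD -intrD addNr mulr0z addr0.
Qed.

Lemma mshift_neq0 (K : fieldType) (k : nat) (v : zvec k) (q : {mpoly K[k]}) :
  q != 0 -> mshift v q != 0.
Proof.
apply: contra => /eqP h; rewrite -(@mshiftK K k v q) h /mshift.
by rewrite comp_mpoly0.
Qed.

Lemma zeval_shift (K : fieldType) (k : nat) (v : zvec k) (q : {mpoly K[k]}) z :
  zeval (mshift v q) z = zeval q (zadd z v).
Proof.
rewrite /zeval /mshift comp_mpoly_meval; apply: meval_eq => i.
by rewrite tnth_map tnth_ord_tuple mevalD mevalXU mevalC /zadd intrD.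
Qed.

Lemma frac_self (K : fieldType) (k : nat) (A : {mpoly K[k]}) :
  A != 0 -> frac_of A A = 1.
Proof. by move=> h; rewrite /frac_of divff // tofrac_eq0. Qed.

Theorem propositionB8 (K : fieldType) (k : nat) (f : zvec k -> K) :
  hypergeometric_term f -> zero_divisor f ->
  exists A B : zvec k -> {mpoly K[k]},
    (forall v : zvec k,
        [/\ A v != 0, B v != 0 &
            forall z : zvec k, zeval (A v) z * f z = zeval (B v) z * f (zadd z v)]) /\
    (forall v w : zvec k,
        frac_of (A v) (B v) * frac_of (mshift v (A w)) (mshift v (B w)) =
        frac_of (A w) (B w) * frac_of (mshift w (A v)) (mshift w (B v))).
Proof.
move=> _ [p [p0 hp]].
have nz : forall v, p * mshift v p != 0.
  by move=> v; rewrite mulf_neq0 // mshift_neq0.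
exists (fun v => p * mshift v p), (fun v => p * mshift v p); split.
  move=> v; split; try exact: nz.
  move=> z; rewrite /zeval mevalM -/(zeval _ _) -/(zeval _ _) zeval_shift.
  rewrite mulrAC hp mul0r -mulrA hp mulr0 //.
move=> v w; rewrite !frac_self ?mshift_neq0 //.
Qed.
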